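(* Let $(\mathbb L,d)$ be a finite metric space and $m,m_V,\tilde m>0$. Then \[ \sup_{x\in\mathbb L}\sum_{\substack{X\subset\mathbb L\\ F\subset T\in\mathfrak T(X)}}12^{-|X|}c_{\sf g}(m_V)^{-|F|}c_{\sf g}(m)^{-|T\setminus F|}e^{-m_Vd(F)-md(T\setminus F)}e^{-\tilde m d(x;X)}\le c_{\sf g}(\tilde m) \] and \[ \sup_{x\in\mathbb L}\sum_{\substack{X\subset\mathbb L\\ F\subset T\in\mathfrak T(X)}}32^{-|X|}c_{\sf g}(m_V)^{-|F|}c_{\sf g}(m)^{-|T\setminus F|}e^{-m_Vd(F)-md(T\setminus F)}e^{-\tilde m d(x;X)}\prod_{y\in X}d^T(y)!\le c_{\sf g}(\tilde m). \]
   Context: The sums run over nonempty subsets $X\subset\mathbb L$, trees $T\in\mathfrak T(X)$ with vertex set $X$ (for $|X|=1$ the only tree is the edgeless one), and edge subsets $F\subset T$. For a set of edges $F$, $|F|$ is its number of edges and $d(F)=\sum_{\{y,y'\}\in F}d(y,y')$. $d(x;X)=\min_{x'\in X}d(x,x')$. $d^T(y)$ is the degree of $y$ in $T$. The geometric constant is $c_{\sf g}(m)=\sup_{x\in\mathbb L}\sum_{x'\in\mathbb L}e^{-md(x,x')}$. *)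

(* Defs.v *)
From HB Require Import structures.
From mathcomp Require Import all_boot all_order all_algebra.
From mathcomp Require Import all_classical all_reals all_analysis.
Set Implicit Arguments. Unset Strict Implicit. Unset Printing Implicit Defensive.
Import Order.TTheory GRing.Theory Num.Theory.
Local Open Scope ring_scope.

Section Defs.
Context {R : realType} {L : finType}.

Definition is_metric (d : L -> L -> R) : Prop :=
  [/\ forall x y, 0 <= d x y,
      forall x y, d x y = 0 <-> x = y,
      forall x y, d x y = d y x &
      forall x y z, d x z <= d x y + d y z].

(* an (undirected) edge is a 2-element subset {y, y'} of L;
   a graph is given by a set of edges *)
Definition adj (E : {set {set L}}) : rel L := fun a b => [set a; b] \in E.

Definition is_tree (X : {set L}) (E : {set {set L}}) : Prop :=
  [/\ forall e, e \in E -> e \subset X /\ #|e| = 2%N,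
      forall x y, x \in X -> y \in X -> connect (adj E) x y &
      (* acyclic: every edge {a,b} is a bridge (no other path from a to b) *)
      forall e a b, e \in E -> e = [set a; b] -> ~~ connect (adj (E :\ e)) a b].

(* length of the edge {y,y'} : d(y,y') (written symmetrically) *)
Definition edge_len (d : L -> L -> R) (e : {set L}) : R :=
  (\sum_(y in e) \sum_(y' in e) d y y') / 2.

Definition dset (d : L -> L -> R) (F : {set {set L}}) : R :=
  \sum_(e in F) edge_len d e.

Definition dist_to (d : L -> L -> R) (x : L) (X : {set L}) : R :=
  match [pick x' in X] with
  | Some x0 => \big[Num.min/d x x0]_(x' in X) d x x'
  | None => 0
  end.

Definition deg (E : {set {set L}}) (y : L) : nat := #|[set e in E | y \in e]|.

Definition cg (d : L -> L -> R) (m : R) : R :=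
  \big[Num.max/0]_(x : L) \sum_(x' : L) expR (- (m * d x x')).

End Defs.

(* Main.v *)
Require Import Defs.
From HB Require Import structures.
From mathcomp Require Import all_boot all_order all_algebra.
From mathcomp Require Import all_classical all_reals all_analysis.
From mathcomp Require Import zify ring lra.
Set Implicit Arguments. Unset Strict Implicit. Unset Printing Implicit Defensive.
Import Order.TTheory GRing.Theory Num.Theory.

Module Helpers.
Import eqtype ssrnat seq choice fintype finfun bigop finset fingraph.
Import Order.TTheory GRing.Theory Num.Theory.

Local Notation inE := finset.inE.

Section C.
Variable L : finType.
Implicit Types (X : {set L}) (E : {set {set L}}).

Lemma adj_sym E : symmetric (adj E).
Proof. by move=> a b; rewrite /adj finset.setUC. Qed.

Lemma connect_adj_sym E a b : connect (adj E) a b = connect (adj E) b a.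
Proof. exact: (sym_connect_sym (adj_sym E)). Qed.

Lemma connect_ind_pred (e : rel L) (P : pred L) a b :
  P a -> (forall y w, P y -> e y w -> P w) -> connect e a b -> P b.
Proof.
move=> Pa step /connectP [p pth ->]; elim: p a Pa pth => //= w p IH a Pa.
by case/andP=> eaw pth; apply: IH (step _ _ Pa eaw) pth.
Qed.

Lemma connect_mono E E' a b :
  E \subset E' -> connect (adj E) a b -> connect (adj E') a b.
Proof.
move=> sub; apply: connect_sub => u v huv; apply: connect1.
by rewrite /adj (fintype.subsetP sub).
Qed.

Definition tcomp E X u := [set y in X | connect (adj E) u y].
Definition tcompE E X u := [set f in E | f \subset tcomp E X u].

Lemma comp_tree X E E' u : is_tree X E -> E' \subset E ->
  is_tree (tcomp E' X u) (tcompE E' X u).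
Proof.
case=> T1 T2 T3 sub; split.
- move=> f; rewrite inE => /andP[fE' fsub].
  by have [fX c2] := T1 f (fintype.subsetP sub f fE').
- have key : forall w, connect (adj E') u w -> connect (adj (tcompE E' X u)) u w.
    move=> w cw.
    suff /andP[] : connect (adj (tcompE E' X u)) u w && connect (adj E') u w by [].
    apply: (@connect_ind_pred (adj E') (fun w => connect (adj (tcompE E' X u)) u w && connect (adj E') u w) u w) cw; first by rewrite !connect0.
    move=> y v /andP[c1 c2] ayv.
    have c2' : connect (adj E') u v by apply: connect_trans c2 (connect1 ayv).
    rewrite c2' andbT; apply: connect_trans c1 (connect1 _).
    have [fX _] := T1 _ (fintype.subsetP sub _ ayv).
    rewrite /adj inE; move: ayv; rewrite /adj => ->; apply/fintype.subsetP => t; rewrite !inE => /orP[]/eqP->.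
      by rewrite c2 andbT (fintype.subsetP fX) // !inE eqxx.
    by rewrite c2' andbT (fintype.subsetP fX) // !inE eqxx orbT.
  move=> y y'; rewrite !inE => /andP[_ cy] /andP[_ cy'].
  apply: connect_trans (key _ cy'); rewrite connect_adj_sym; exact: key.
- move=> f a b; rewrite inE => /andP[fE' _] fab.
  apply: contra (T3 f a b (fintype.subsetP sub _ fE') fab); apply: connect_mono.
  by apply: finset.setSD; apply: fintype.subset_trans sub; apply/fintype.subsetP=> g; rewrite inE => /andP[].
Qed.


Lemma degE E y : deg E y = \sum_(f in E) (y \in f : nat).
Proof.
rewrite /deg -sum1_card (big_mkcond (fun f => f \in E)) /=.
rewrite big_mkcond /=; apply: eq_bigr => f _; rewrite !inE.
by case: (f \in E); case: (y \in f).
Qed.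

Lemma deg_split (e : {set L}) A B y : e \notin A :|: B -> [disjoint A & B] ->
  deg (e |: (A :|: B)) y = ((y \in e) + deg A y + deg B y)%N.
Proof.
move=> eAB dAB; rewrite !degE big_setU1 //= -addnA; congr (_ + _)%N.
have -> : \sum_(f in A :|: B) (y \in f : nat) = \sum_(f in [predU A & B]) (y \in f : nat).
  by apply: eq_bigl => f; rewrite !inE.
by rewrite bigU.
Qed.

Section Split.
Variables (X : {set L}) (T : {set {set L}}) (r z : L).
Hypothesis tT : is_tree X T.
Hypothesis eT : [set r; z] \in T.

Definition T' := T :\ [set r; z].
Definition X1 := tcomp T' X r.
Definition X2 := tcomp T' X z.
Definition T1 := tcompE T' X r.
Definition T2 := tcompE T' X z.

Lemma rz : r != z.
Proof.
case: tT => T1h _ _; have [_ c2] := T1h _ eT; apply/eqP=> erz.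
by move: c2; rewrite erz finset.setUid cards1.
Qed.

Lemma eX : [set r; z] \subset X.
Proof. by case: tT => T1h _ _; have [] := T1h _ eT. Qed.

Lemma rX : r \in X. Proof. by rewrite (fintype.subsetP eX) // !inE eqxx. Qed.
Lemma zX : z \in X. Proof. by rewrite (fintype.subsetP eX) // !inE eqxx orbT. Qed.

Lemma X1r : r \in X1. Proof. by rewrite inE rX connect0. Qed.
Lemma X2z : z \in X2. Proof. by rewrite inE zX connect0. Qed.

Lemma nconn : ~~ connect (adj T') r z.
Proof. by case: tT => _ _ T3; exact: T3 _ _ _ eT erefl. Qed.

Lemma disjX : [disjoint X1 & X2].
Proof.
apply/pred0P => y /=; apply/negbTE/negP; rewrite !inE => /andP[/andP[_ c1] /andP[_ c2]].
by move/negP: nconn; apply; apply: connect_trans c1 _; rewrite connect_adj_sym.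
Qed.

Lemma coverX : X = X1 :|: X2.
Proof.
apply/setP => y; rewrite !inE; case yX: (y \in X) => //=.
case: tT => _ T2h _.
have := T2h _ _ rX yX.
move=> c; apply/esym; move: c.
apply: (@connect_ind_pred (adj T) (fun w => connect (adj T') r w || connect (adj T') z w) r y).
  by rewrite connect0.
move=> a b Pa aab; case E: ([set a; b] == [set r; z]).
  have : b \in [set r; z] by rewrite -(eqP E) !inE eqxx orbT.
  by rewrite !inE => /orP[]/eqP->; rewrite connect0 ?orbT.
have ab' : adj T' a b by rewrite /adj /T' !inE E.
by case/orP: Pa => c; [rewrite (connect_trans c (connect1 ab')) | rewrite (connect_trans c (connect1 ab')) orbT].
Qed.

Lemma T'sub : T' \subset T. Proof. exact: subsetDl. Qed.

Lemma tree1 : is_tree X1 T1. Proof. exact: comp_tree tT T'sub. Qed.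
Lemma tree2 : is_tree X2 T2. Proof. exact: comp_tree tT T'sub. Qed.

Lemma coverT' : T' = T1 :|: T2.
Proof.
apply/setP => f; apply/idP/idP; last first.
  by rewrite inE; case/orP; rewrite inE => /andP[].
move=> fT'; have fT : f \in T by rewrite (fintype.subsetP T'sub).
have fne : f \notin [set [set r; z]] by move: fT'; rewrite /T' !inE => /andP[].
rewrite inE /T1 /T2 /tcompE !finset.in_set fne fT /=.
case: tT => T1h _ _; have [fX /eqP/cards2P [a [b [_ fab]]]] := T1h _ fT.
have aX : a \in X by rewrite (fintype.subsetP fX) // fab !inE eqxx.
have bX : b \in X by rewrite (fintype.subsetP fX) // fab !inE eqxx orbT.
have ab : adj T' a b by rewrite /adj -fab.
have : a \in X1 :|: X2 by rewrite -coverX.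
rewrite !inE => /orP[] /andP[_ c].
  apply/orP; left; apply/fintype.subsetP => t; rewrite fab !inE => /orP[]/eqP->.
    by rewrite aX c.
  by rewrite bX (connect_trans c (connect1 ab)).
apply/orP; right; apply/fintype.subsetP => t; rewrite fab !inE => /orP[]/eqP->.
  by rewrite aX c.
by rewrite bX (connect_trans c (connect1 ab)).
Qed.

Lemma coverT : T = [set r; z] |: (T1 :|: T2).
Proof. by rewrite -coverT' /T' finset.setD1K. Qed.

Lemma enotin : [set r; z] \notin T1 :|: T2.
Proof. by rewrite -coverT' /T' !inE eqxx. Qed.

Lemma disjT : [disjoint T1 & T2].
Proof.
apply/pred0P => f /=; apply/negbTE/negP; rewrite !inE => /andP[/andP[fT' s1] /andP[_ s2]].
move/andP: fT' => [_ fT].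
case: tT => T1h _ _; have [_ /eqP/cards2P [a [b [_ fab]]]] := T1h _ fT.
have af : a \in f by rewrite fab !inE eqxx.
move/pred0P: disjX => /(_ a) /=.
by rewrite (fintype.subsetP s1 _ af) (fintype.subsetP s2 _ af).
Qed.

Lemma deg1 y : y \in X1 -> deg T y = (deg T1 y + (y == r))%N.
Proof.
move=> y1; rewrite {1}coverT deg_split ?enotin ?disjT //.
have -> : deg T2 y = 0%N.
  apply/eqP; rewrite cards_eq0; apply/eqP/setP => f; rewrite !inE.
  apply/negbTE; apply/negP => /andP[/andP[_ s2] yf].
  move/pred0P: disjX => /(_ y) /=; by rewrite y1 (fintype.subsetP s2 _ yf).
have -> : (y \in [set r; z]) = (y == r).
  rewrite !inE; case: (y =P z) => [eyz|]; last by rewrite orbF.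
  move/pred0P: disjX => /(_ y) /=; by rewrite y1 eyz X2z.
by rewrite addn0 addnC.
Qed.

Lemma deg2 y : y \in X2 -> deg T y = (deg T2 y + (y == z))%N.
Proof.
move=> y2; rewrite {1}coverT deg_split ?enotin ?disjT //.
have -> : deg T1 y = 0%N.
  apply/eqP; rewrite cards_eq0; apply/eqP/setP => f; rewrite !inE.
  apply/negbTE; apply/negP => /andP[/andP[_ s1] yf].
  move/pred0P: disjX => /(_ y) /=; by rewrite y2 (fintype.subsetP s1 _ yf).
have -> : (y \in [set r; z]) = (y == z).
  rewrite !inE; case: (y =P r) => [eyr|] //=.
  move/pred0P: disjX => /(_ y) /=; by rewrite y2 eyr X1r.
by rewrite addn0 addnC.
Qed.

Lemma rnot2 : r \notin X2.
Proof. by apply/negP => r2; move/pred0P: disjX => /(_ r) /=; rewrite X1r r2. Qed.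

End Split.

Lemma set22 (a b : L) : #|[set a; b]| = 2%N -> a != b.
Proof. by move=> h; apply/eqP => eab; move: h; rewrite eab finset.setUid cards1. Qed.

Lemma nbr_card X T r : is_tree X T ->
  deg T r = #|[set z | [set r; z] \in T]|.
Proof.
case=> T1h _ _; rewrite /deg.
have -> : [set f in T | r \in f] = (fun z => [set r; z]) @: [set z | [set r; z] \in T].
  apply/setP => f; rewrite inE; apply/andP/imsetP.
    case=> fT rf; have [_ /eqP/cards2P [a [b [_ fab]]]] := T1h _ fT.
    move: rf; rewrite fab !inE => /orP[]/eqP ?; subst.
      by exists b; rewrite // inE.
    by exists a; rewrite ?inE finset.setUC.
  by case=> z; rewrite inE => zT ->; rewrite zT !inE eqxx.
rewrite card_in_imset // => z1 z2; rewrite !inE => z1T z2T e12.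
have n1 := set22 (proj2 (T1h _ z1T)).
have : z1 \in [set r; z2] by rewrite -e12 !inE eqxx orbT.
by rewrite !inE eq_sym (negbTE n1) /= => /eqP.
Qed.

Lemma nbr_exists X T r : is_tree X T -> r \in X -> X != [set r] ->
  exists z, [set r; z] \in T.
Proof.
case=> _ T2h _ rX neX.
have [y yX yr] : exists2 y, y \in X & y != r.
  apply/exists_inP; apply: contraR neX => /exists_inPn H.
  rewrite finset.eqEsubset finset.sub1set rX andbT; apply/fintype.subsetP => y yX.
  by have := H y yX; rewrite negbK inE.
case: (boolP [exists z, [set r; z] \in T]) => [/existsP//|/existsPn H].
have : y == r; last by rewrite (negbTE yr).
apply: (@connect_ind_pred (adj T) (fun w => w == r) r y) (T2h _ _ rX yX) => //.
by move=> a b /eqP-> rb; have := H b; rewrite /adj in rb; rewrite rb.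
Qed.

Lemma single_tree X T r : is_tree X T -> X = [set r] -> T = finset.set0.
Proof.
case=> T1h _ _ eX; apply/setP => f; rewrite inE; apply/negbTE/negP => fT.
have [fX c2] := T1h _ fT; have := subset_leq_card fX.
by rewrite c2 eX cards1.
Qed.

Lemma tree_single (r : L) : is_tree [set r] finset.set0.
Proof.
split; first by move=> e; rewrite inE.
  by move=> x y; rewrite !inE => /eqP-> /eqP->; rewrite connect0.
by move=> e a b; rewrite inE.
Qed.

End C.

Section Omega.
Variable L : finType.

Variable q : nat.
Definition hf (n : nat) : nat := (n`! * q ^ n)%N.
Lemma hS n : hf n.+1 = (n.+1 * (q * hf n))%N.
Proof. by rewrite /hf factS expnS; ring. Qed.

Definition omega (T : {set {set L}}) (r : L) (X : {set L}) : nat :=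
  \prod_(y in X) hf (deg T y - (y != r)).

Lemma cardX (X : {set L}) (T : {set {set L}}) (r z : L) : is_tree X T -> [set r; z] \in T ->
  #|X| = (#|X1 X T r z| + #|X2 X T r z|)%N.
Proof.
move=> tT eT; rewrite {1}(coverX tT eT).
rewrite -!sum1_card.
have -> : \sum_(i in X1 X T r z :|: X2 X T r z) 1 =
          \sum_(i in [predU X1 X T r z & X2 X T r z]) 1.
  by apply: eq_bigl => i; rewrite !inE.
by rewrite bigU // disjX.
Qed.

Lemma omega_split (X : {set L}) (T : {set {set L}}) (r z : L) : is_tree X T -> [set r; z] \in T ->
  omega T r X = (deg T r * q * omega (T1 X T r z) r (X1 X T r z)
                   * omega (T2 X T r z) z (X2 X T r z))%N.
Proof.
move=> tT eT; rewrite /omega {1}(coverX tT eT).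
have -> : \prod_(y in X1 X T r z :|: X2 X T r z) hf (deg T y - (y != r)) =
          \prod_(y in [predU X1 X T r z & X2 X T r z]) hf (deg T y - (y != r)).
  by apply: eq_bigl => i; rewrite !inE.
rewrite bigU ?disjX //; congr (_ * _)%N.
  rewrite (bigD1 r (X1r tT eT)) [in RHS](bigD1 r (X1r tT eT)) /= eqxx /=.
  rewrite (deg1 tT eT (X1r tT eT)) eqxx !subn0 addn1 hS -!mulnA.
  congr (_ * (_ * (_ * _)))%N.
  congr (_ * _)%N.
  apply: eq_bigr => y /andP[y1 yr]; by rewrite (deg1 tT eT y1) (negbTE yr) addn0.
apply: eq_bigr => y y2.
have yr : y != r by apply/eqP => eyr; rewrite eyr in y2; case/negP: (rnot2 tT eT).
rewrite (deg2 tT eT y2) yr; case: (y =P z) => [->|_] /=.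
  by rewrite addnK subn0.
by rewrite /= addn0.
Qed.

End Omega.

Section Main.
Variable R : realFieldType.
Variable L : finType.
Local Open Scope ring_scope.
Variables (W : {set L} -> R) (x : R) (q : nat).
Notation PT := ({set L} * {set {set L}})%type.

Definition tw (r : L) (p : PT) : R :=
  x ^+ #|p.1| * \prod_(f in p.2) W f * (omega q p.2 r p.1)%:R.

Lemma rearr (a1 a2 w p1 p2 d qq o1 o2 : R) :
  a1 * a2 * (w * (p1 * p2)) * (d * qq * o1 * o2) =
  d * (qq * w * (a1 * p1 * o1 * (a2 * p2 * o2))).
Proof. by ring. Qed.

Lemma tw_split (X : {set L}) (T : {set {set L}}) (r z : L) :
  is_tree X T -> [set r; z] \in T ->
  tw r (X, T) = (deg T r)%:R * (q%:R * W [set r; z] *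
     (tw r (X1 X T r z, T1 X T r z) * tw z (X2 X T r z, T2 X T r z))).
Proof.
move=> tT eT; rewrite /tw /= (cardX tT eT) (omega_split q tT eT) exprD !natrM.
have -> : \prod_(f in T) W f = \prod_(f in [set r; z] |: (T1 X T r z :|: T2 X T r z)) W f.
  by apply: eq_bigl => f; rewrite -(coverT tT eT).
rewrite big_setU1 ?enotin //=.
have -> : \prod_(f in T1 X T r z :|: T2 X T r z) W f =
          \prod_(f in [predU T1 X T r z & T2 X T r z]) W f.
  by apply: eq_bigl => i; rewrite !inE.
rewrite bigU ?disjT //; exact: rearr.
Qed.


Definition PN (N : nat) (r : L) (p : PT) : bool :=
  (r \in p.1) && (#|p.1| <= N)%N && `[< is_tree p.1 p.2 >].
Definition Phi N r := \sum_(p | PN N r p) tw r p.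

Hypothesis x0 : 0 <= x.
Hypothesis W0 : forall f, 0 <= W f.

Lemma tw_ge0 r p : 0 <= tw r p.
Proof.
by rewrite /tw !mulr_ge0 ?exprn_ge0 ?ler0n //; apply: prodr_ge0 => f _.
Qed.

Lemma Phi_ge0 N r : 0 <= Phi N r.
Proof. by apply: sumr_ge0 => p _; exact: tw_ge0. Qed.

Lemma sum_inj_le (I J : finType) (P : pred I) (Q : pred J) (g : I -> J)
  (F : J -> R) : (forall i j, P i -> P j -> g i = g j -> i = j) ->
  (forall i, P i -> Q (g i)) -> (forall j, Q j -> 0 <= F j) ->
  \sum_(i | P i) F (g i) <= \sum_(j | Q j) F j.
Proof.
move=> inj im F0.
have -> : \sum_(i | P i) F (g i) = \sum_(j in g @: [set i | P i]) F j.
  rewrite big_imset; first by apply: eq_bigl => i; rewrite inE.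
  by move=> i j; rewrite !inE; apply: inj.
rewrite [leRHS](bigID (fun j => j \in g @: [set i | P i])) /=.
have -> : \sum_(j in g @: [set i | P i]) F j =
          \sum_(j | Q j && (j \in g @: [set i | P i])) F j.
  apply: eq_bigl => j; case: imsetP => [[i]|]; rewrite ?andbF // inE => Pi ->.
  by rewrite im.
by rewrite lerDl; apply: sumr_ge0 => j /andP[]; auto.
Qed.

Lemma tw_nbr N r (p : PT) : PN N r p -> p != ([set r], finset.set0) ->
  tw r p = \sum_(z in [set z | [set r; z] \in p.2])
     q%:R * W [set r; z] * (tw r (X1 p.1 p.2 r z, T1 p.1 p.2 r z) *
                     tw z (X2 p.1 p.2 r z, T2 p.1 p.2 r z)).
Proof.
case: p => X T /andP[/andP[/= rX _] /asboolP /= tT] np.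
have nX : X != [set r].
  apply: contraNneq np => eX; by rewrite eX (single_tree tT eX).
have [z0 z0T] := nbr_exists tT rX nX.
have hd : (deg T r)%:R != 0 :> R.
  rewrite pnatr_eq0 (nbr_card r tT) -lt0n; apply/card_gt0P; exists z0.
  by rewrite inE.
rewrite (eq_bigr (fun z => tw r (X, T) / (deg T r)%:R)); last first.
  move=> z; rewrite inE => ez.
  by rewrite [tw r (X, T)](tw_split tT ez) [RHS]mulrC mulKf.
by rewrite sumr_const -(nbr_card r tT) -[_ *+ deg T r]mulr_natr divfK.
Qed.


Variables (B c : R).
Hypothesis WB : forall r, \sum_(z : L) q%:R * W [set r; z] <= B.
Hypothesis hc : x + B * (c * c) <= c.
Hypothesis B0 : 0 <= B.

Lemma c0 : 0 <= c.
Proof.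
apply: le_trans hc; apply: addr_ge0 => //; apply: mulr_ge0 => //.
by rewrite -expr2 sqr_ge0.
Qed.

Lemma tw_single r : tw r ([set r], finset.set0) = x.
Proof.
rewrite /tw /= cards1 expr1 big_set0 mulr1 /omega big_set1 eqxx subn0 /hf.
have -> : deg finset.set0 r = 0%N.
  by rewrite /deg; apply/eqP; rewrite cards_eq0; apply/eqP/setP => e; rewrite !inE.
by rewrite fact0 expn0 mulr1.
Qed.

Lemma Phi_le N : forall r, Phi N r <= c.
Proof.
elim: N => [|N IH] r.
  rewrite /Phi big1 ?c0 // => p /andP[/andP[rX]]; rewrite leqn0 cards_eq0 => /eqP X0.
  by rewrite X0 inE in rX.
have p0P : PN N.+1 r ([set r], finset.set0).
  rewrite /PN /= inE eqxx cards1 /=; apply/asboolP; exact: tree_single.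
rewrite /Phi (bigD1 _ p0P) /= tw_single.
under eq_bigr => p /andP[Pp np] do rewrite (tw_nbr Pp np).
rewrite (exchange_big_dep predT) //=.
apply: le_trans (_ : x + \sum_(z : L) q%:R * W [set r; z] * (c * c) <= c); last first.
  rewrite -mulr_suml; apply: le_trans hc; rewrite lerD2l ler_wpM2r //.
  by rewrite -expr2 sqr_ge0.
rewrite lerD2l; apply: ler_sum => z _; rewrite -mulr_sumr ler_wpM2l ?mulr_ge0 //.
apply: le_trans (_ : Phi N r * Phi N z <= c * c); last first.
  by apply: ler_pM; rewrite ?Phi_ge0.
rewrite /Phi big_distrlr pair_big_dep /=.
apply: (@sum_inj_le _ _
  (fun p : PT => PN N.+1 r p && (p != ([set r], finset.set0)) && (z \in [set z | [set r; z] \in p.2]))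
  (fun qq : PT * PT => PN N r qq.1 && PN N z qq.2)
  (fun p : PT => ((X1 p.1 p.2 r z, T1 p.1 p.2 r z), (X2 p.1 p.2 r z, T2 p.1 p.2 r z)))
  (fun qq : PT * PT => tw r qq.1 * tw z qq.2)).
- move=> [X T] [X' T'] /= /andP[/andP[/andP[_ /asboolP tT] _]]; rewrite inE => eT.
  move=> /andP[/andP[/andP[_ /asboolP tT'] _]]; rewrite inE => eT'.
  case=> e1 e2 e3 e4; simpl in *; congr pair.
    by rewrite (coverX tT eT) (coverX tT' eT') e1 e3.
  by rewrite (coverT tT eT) (coverT tT' eT') e2 e4.
- move=> [X T] /= /andP[/andP[/andP[/andP[_ hX] /asboolP tT] _]]; rewrite inE => eT.
  have := cardX tT eT.
  have h1 : (0 < #|X1 X T r z|)%N by apply/card_gt0P; exists r; exact: X1r.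
  have h2 : (0 < #|X2 X T r z|)%N by apply/card_gt0P; exists z; exact: X2z.
  move=> hc'; simpl in hX, hc'.
  rewrite /PN /= (X1r tT eT) (X2z tT eT) /=.
  apply/andP; split; apply/andP; split; try lia.
    by apply/asboolP; exact: (@tree1 _ X T r z tT).
  by apply/asboolP; exact: (@tree2 _ X T r z tT).
- by move=> qq _; apply: mulr_ge0; apply: tw_ge0.
Qed.

End Main.

End Helpers.
Import Helpers.

Module Final.
Local Notation inE := finset.inE.
Local Open Scope ring_scope.

Section F1.
Variables (R : realType) (L : finType) (d : L -> L -> R).
Hypothesis dm : is_metric d.

Lemma d_refl y : d y y = 0.
Proof. by case: dm => _ h _ _; apply/h. Qed.

Lemma d_sym y z : d y z = d z y.
Proof. by case: dm. Qed.

Lemma edge_len2 r z : edge_len d [set r; z] = d r z.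
Proof.
case: (eqVneq r z) => [<-|nrz].
  by rewrite finset.setUid /edge_len !big_set1 d_refl mul0r.
rewrite /edge_len big_setU1 ?inE //= big_set1 big_setU1 ?inE //= big_set1.
rewrite big_setU1 ?inE //= big_set1 !d_refl (d_sym z r).
by lra.
Qed.

Lemma cg_ge (m : R) (y : L) : \sum_(z : L) expR (- (m * d y z)) <= cg d m.
Proof. exact: (le_bigmax 0 (fun y0 => \sum_(z : L) expR (- (m * d y0 z))) y). Qed.

Lemma cg_ge1 (m : R) (y : L) : 1 <= cg d m.
Proof.
apply: le_trans (cg_ge m y); rewrite (bigD1 y) //= d_refl mulr0 oppr0 expR0.
by rewrite lerDl; apply: sumr_ge0 => z _; exact: expR_ge0.
Qed.

Lemma cg_ge0 (m : R) : 0 <= cg d m.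
Proof.
rewrite /cg; apply: (big_ind (fun v => 0 <= v)) => //.
  by move=> u v u0 v0; rewrite le_max u0.
by move=> y _; apply: sumr_ge0 => z _; exact: expR_ge0.
Qed.

Lemma dist_le (mt : R) x (X : {set L}) : 0 <= mt -> X != finset.set0 ->
  expR (- (mt * dist_to d x X)) <= \sum_(r in X) expR (- (mt * d x r)).
Proof.
move=> mt0 nX.
have [r0 r0X ->] : exists2 r0, r0 \in X & dist_to d x X = d x r0.
  rewrite /dist_to; case: pickP => [x0 x0X|X0]; last first.
    by case/negP: nX; apply/eqP/finset.setP => y; rewrite inE X0.
  apply: (big_ind (fun v => exists2 r, r \in X & v = d x r)).
  - by exists x0.
  - move=> u v [r1 r1X ->] [r2 r2X ->]; rewrite minEle.
    by case: ifP => _; [exists r1 | exists r2].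
  - by move=> y yX; exists y.
rewrite (bigD1 r0) //= lerDl; apply: sumr_ge0 => z _; exact: expR_ge0.
Qed.


Lemma prod_sum_subset (I : finType) (T : {set I}) (u v : I -> R) :
  \prod_(i in T) (u i + v i) =
  \sum_(F : {set I} | F \subset T) (\prod_(i in F) u i * \prod_(i in T :\: F) v i).
Proof.
have := @bigA_distr R 0 1 *%R +%R I (fun i => if i \in T then u i else 0)
  (fun i => if i \in T then v i else 1).
have -> : \prod_(i in T) (u i + v i) =
    \prod_i ((if i \in T then u i else 0) + (if i \in T then v i else 1)).
  rewrite big_mkcond /=; apply: eq_bigr => i _; by case: (i \in T); rewrite ?add0r.
move=> ->.
rewrite (bigID (fun J : {set I} => J \subset T)) /= [X in _ + X]big1 ?addr0.
  apply: eq_bigr => J sJ.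
  rewrite (big_mkcond (fun i => i \in J)) (big_mkcond (fun i => i \in T :\: J)).
  rewrite -big_split /=; apply: eq_bigr => i _; rewrite inE.
  case: (boolP (i \in J)) => iJ /=.
    by rewrite (fintype.subsetP sJ i iJ) mulr1.
  by case: (i \in T); rewrite mul1r.
move=> J /fintype.subsetPn [i iJ niT].
by rewrite (bigD1 i) //= iJ (negbTE niT) mul0r.
Qed.


Definition Wf (m mV : R) (e : {set L}) : R :=
  (cg d mV)^-1 * expR (- (mV * edge_len d e)) + (cg d m)^-1 * expR (- (m * edge_len d e)).

Lemma rearr3 (C E P D : R) : C * E * P * D = C * D * P * E.
Proof. by ring. Qed.

Lemma rearr2 (C A B X Y E : R) :
  C * A * B * (X * Y) * E = C * E * (A * X * (B * Y)).
Proof. by ring. Qed.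

Lemma expR_dset (k : R) (S : {set {set L}}) :
  \prod_(e in S) expR (- (k * edge_len d e)) = expR (- (k * dset d S)).
Proof.
by rewrite /dset mulr_sumr -sumrN (big_morph _ (@expRD R) (expR0 R)).
Qed.

Lemma inner_F (m mV C E : R) (T : {set {set L}}) :
  \sum_(F : {set {set L}} | F \subset T)
     (C * cg d mV ^- #|F| * cg d m ^- #|T :\: F|
      * expR (- (mV * dset d F) - m * dset d (T :\: F)) * E)
  = C * E * \prod_(e in T) Wf m mV e.
Proof.
rewrite /Wf prod_sum_subset mulr_sumr; apply: eq_bigr => F _.
rewrite !big_split /= !prodr_const !exprVn !expR_dset expRD.
exact: rearr2.
Qed.


Lemma main_bound (mt : R) (x : L) (W : {set L} -> R) (xx : R) (q : nat)
  (C : {set L} -> R) (D : {set L} -> {set {set L}} -> R) :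
  0 <= mt ->
  (forall (X : {set L}) (T : {set {set L}}), 0 <= C X * D X T * \prod_(e in T) W e) ->
  (forall (r : L) (X : {set L}) (T : {set {set L}}), r \in X -> is_tree X T ->
     C X * D X T * \prod_(e in T) W e <= tw W xx q r (X, T)) ->
  (forall r, Phi W xx q #|L| r <= 1) ->
  \sum_(X : {set L} | X != finset.set0)
     \sum_(T : {set {set L}} | `[< is_tree X T >])
       (C X * D X T * \prod_(e in T) W e * expR (- (mt * dist_to d x X)))
  <= cg d mt.
Proof.
move=> mt0 G0 Gle Phi1.
apply: le_trans (_ : \sum_(X : {set L} | X != finset.set0)
   \sum_(T : {set {set L}} | `[< is_tree X T >]) \sum_(r in X)
      (C X * D X T * \prod_(e in T) W e * expR (- (mt * d x r))) <= _).
  apply: ler_sum => X nX; apply: ler_sum => T _; rewrite -mulr_sumr.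
  by apply: ler_wpM2l; [exact: G0 | exact: dist_le].
under eq_bigr => X _ do rewrite exchange_big /=.
rewrite (exchange_big_dep predT) //=.
apply: le_trans (cg_ge mt x); apply: ler_sum => r _.
under eq_bigr => X _ do rewrite -mulr_suml.
rewrite -mulr_suml -[leRHS]mul1r; apply: ler_wpM2r; first exact: expR_ge0.
apply: le_trans (Phi1 r); rewrite /Phi pair_big_dep /=.
have -> : \sum_(p : {set L} * {set {set L}} | (p.1 != finset.set0) && (r \in p.1) && `[< is_tree p.1 p.2 >])
            (C p.1 * D p.1 p.2 * \prod_(e in p.2) W e) =
          \sum_(p | PN #|L| r p) (C p.1 * D p.1 p.2 * \prod_(e in p.2) W e).
  apply: eq_bigl => -[X T] /=; rewrite /PN /= max_card andbT.
  case rX: (r \in X); rewrite ?andbF //=.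
  have -> // : X != finset.set0 by apply/eqP => X0; rewrite X0 inE in rX.
apply: ler_sum => -[X T] /andP[/andP[rX _] /asboolP tT]; exact: Gle.
Qed.


Lemma Wf_ge0 (m mV : R) e : 0 <= Wf m mV e.
Proof.
by rewrite /Wf addr_ge0 // mulr_ge0 ?expR_ge0 // invr_ge0 cg_ge0.
Qed.

Lemma half_le (k : R) r : (cg d k)^-1 * \sum_(z : L) expR (- (k * d r z)) <= 1.
Proof.
have a1 := cg_ge1 k r.
have a0 : cg d k != 0 by apply/eqP => a0; rewrite a0 in a1; lra.
rewrite -(mulVf a0); apply: ler_wpM2l; last exact: cg_ge.
by rewrite invr_ge0 cg_ge0.
Qed.

Lemma WB_le (m mV : R) (q : nat) r :
  \sum_(z : L) q%:R * Wf m mV [set r; z] <= q%:R * 2.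
Proof.
rewrite -mulr_sumr ler_wpM2l // /Wf big_split /=.
under eq_bigr => z _ do rewrite edge_len2.
under [X in _ + X]eq_bigr => z _ do rewrite edge_len2.
rewrite -!mulr_sumr.
by have := half_le mV r; have := half_le m r; lra.
Qed.

Lemma fact_le (n : nat) (b : bool) : (n`! <= (n - b)`! * 2 ^ (n - b))%N.
Proof.
case: b; last by rewrite subn0 leq_pmulr // expn_gt0.
case: n => [|k] //=; rewrite subSS subn0 factS mulnC leq_mul2l.
by rewrite (ltn_expl k (isT : (1 < 2)%N)) orbT.
Qed.

End F1.
End Final.

Local Open Scope ring_scope.

Theorem lemma5p6 (R : realType) (L : finType) (d : L -> L -> R)
  (m mV mt : R) :
  is_metric d -> 0 < m -> 0 < mV -> 0 < mt ->
  \big[Num.max/0]_(x : L)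
     (\sum_(X : {set L} | X != finset.set0)
        \sum_(T : {set {set L}} | `[< is_tree X T >])
          \sum_(F : {set {set L}} | F \subset T)
            (12%:R ^- #|X| * cg d mV ^- #|F| * cg d m ^- #|T :\: F|
             * expR (- (mV * dset d F) - m * dset d (T :\: F))
             * expR (- (mt * dist_to d x X))))
   <= cg d mt
  /\
  \big[Num.max/0]_(x : L)
     (\sum_(X : {set L} | X != finset.set0)
        \sum_(T : {set {set L}} | `[< is_tree X T >])
          \sum_(F : {set {set L}} | F \subset T)
            (32%:R ^- #|X| * cg d mV ^- #|F| * cg d m ^- #|T :\: F|
             * expR (- (mV * dset d F) - m * dset d (T :\: F))
             * expR (- (mt * dist_to d x X))
             * \prod_(y in X) ((deg T y)`!)%:R))
   <= cg d mt.
Proof.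
move=> dm m0 mV0 mt0; split.
- apply: bigmax_le; first exact: Final.cg_ge0.
  move=> x _.
  rewrite (eq_bigr (fun X => \sum_(T | `[< is_tree X T >])
     (12%:R ^- #|X| * 1 * \prod_(e in T) Final.Wf d m mV e
        * expR (- (mt * dist_to d x X))))); last first.
    by move=> X _; apply: eq_bigr => T _; rewrite Final.inner_F mulr1 mulrAC.
  apply: (@Final.main_bound R L d mt x (Final.Wf d m mV) (12%:R^-1) 1%N
     (fun X => 12%:R ^- #|X|) (fun _ _ => 1)).
  + exact: ltW.
  + move=> X T; rewrite mulr1 mulr_ge0 // ?invr_ge0 ?exprn_ge0 //.
    by apply: prodr_ge0 => e _; exact: Final.Wf_ge0.
  + move=> r X T rX tT; rewrite /tw /= mulr1 exprVn -[leLHS]mulr1.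
    apply: ler_wpM2l.
      by rewrite mulr_ge0 ?invr_ge0 ?exprn_ge0 //; apply: prodr_ge0 => e _; exact: Final.Wf_ge0.
    rewrite ler1n /omega; apply: prodn_gt0 => y; rewrite /hf muln_gt0 fact_gt0.
    by rewrite expn_gt0.
  + move=> r.
    apply: (le_trans (@Phi_le R L (Final.Wf d m mV) (12%:R^-1) 1%N _ _ 2 (4%:R^-1) _ _ _ #|L| r)).
    all: try exact: Final.Wf_ge0.
    all: try (by move=> z; apply: le_trans (Final.WB_le dm m mV 1 z) _; lra).
    all: try lra.
- apply: bigmax_le; first exact: Final.cg_ge0.
  move=> x _.
  rewrite (eq_bigr (fun X => \sum_(T | `[< is_tree X T >])
     (32%:R ^- #|X| * \prod_(y in X) ((deg T y)`!)%:R * \prod_(e in T) Final.Wf d m mV e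
        * expR (- (mt * dist_to d x X))))); last first.
    move=> X _; apply: eq_bigr => T _; rewrite -mulr_suml Final.inner_F.
    exact: Final.rearr3.
  apply: (@Final.main_bound R L d mt x (Final.Wf d m mV) (32%:R^-1) 2%N
     (fun X => 32%:R ^- #|X|) (fun X T => \prod_(y in X) ((deg T y)`!)%:R)).
  + exact: ltW.
  + move=> X T; rewrite !mulr_ge0 // ?invr_ge0 ?exprn_ge0 //.
      by apply: prodr_ge0 => y _.
    by apply: prodr_ge0 => e _; exact: Final.Wf_ge0.
  + move=> r X T rX tT; rewrite /tw /= exprVn mulrAC.
    apply: ler_wpM2l.
      by rewrite mulr_ge0 ?invr_ge0 ?exprn_ge0 //; apply: prodr_ge0 => e _; exact: Final.Wf_ge0.
    rewrite -natr_prod ler_nat /omega; apply: leq_prod => y _; rewrite /hf.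
    exact: Final.fact_le.
  + move=> r.
    apply: (le_trans (@Phi_le R L (Final.Wf d m mV) (32%:R^-1) 2%N _ _ 4 (8%:R^-1) _ _ _ #|L| r)).
    all: try exact: Final.Wf_ge0.
    all: try (by move=> z; apply: le_trans (Final.WB_le dm m mV 2 z) _; lra).
    all: try lra.
Qed.
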